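(* Let $\alpha>0$ be real. If $\alpha=1$ let $\mathcal X=\mathbb{CP}^1$ and $f(x)=1-x$; if $\alpha\neq1$ let $\mathcal X=(0,1)\subset\mathbb R$ and $f(x)=(1-x^\alpha)^{1/\alpha}$, so that in both cases $x^\alpha+f(x)^\alpha=1$. Let $S(x,y)=(u,v)=\big(x f(y)/f(xy),\,xy\big)$. Then: (i) $f(u)f(v)=f(x)$ for all $x,y$, with $(u,v)=S(x,y)$ (hence $S$ is a pentagon map); (ii) $S$ preserves the Poisson structure $\Omega=m(x,y)\,\partial x\wedge\partial y$ with $m(x,y)=y\,f(y)^{\alpha-1}f(x)^\alpha$, i.e. $m(u,v)/m(x,y)$ equals the Jacobian determinant $\det\frac{\partial(u,v)}{\partial(x,y)}$; (iii) $I(x,y)=x f(y)$ is invariant: $I(u,v)=I(x,y)$. Consequently $S$ is a Liouville integrable map.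
   Context: A map of the plane is Liouville integrable (in the sense of Veselov) if it preserves a Poisson structure and admits a functionally independent invariant function (one suffices in two dimensions). Pentagon map: for $S:Y\times Y\to Y\times Y$, with $S_{12}=S\times\mathrm{id}$, $S_{23}=\mathrm{id}\times S$, $S_{13}(y_1,y_2,y_3)=(p,y_2,q)$ where $(p,q)=S(y_1,y_3)$, one requires $S_{12}S_{13}S_{23}=S_{23}S_{12}$. *)

(* Defs.v *)
From HB Require Import structures.
From mathcomp Require Import all_boot all_order all_algebra.
From mathcomp Require Import all_classical all_reals all_analysis.
From mathcomp Require Import complex.
Set Implicit Arguments. Unset Strict Implicit. Unset Printing Implicit Defensive.
Import Order.TTheory GRing.Theory Num.Theory.
Import numFieldNormedType.Exports.
Local Open Scope ring_scope.

(* Generic notions for maps of a 2-dimensional space K x K, where K is *)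
(* a numFieldType (K = R real, or K = R[i] complex, in which case the  *)
(* derivatives below are complex (holomorphic) derivatives).           *)

Section Generic.
Variable K : numFieldType.

Definition pdx (g : K -> K -> K) (x y : K) : K :=
  derive1 (fun t : K^o => (g t y : K^o)) x.
Definition pdy (g : K -> K -> K) (x y : K) : K :=
  derive1 (fun t : K^o => (g x t : K^o)) y.

Definition has_partials (g : K -> K -> K) (x y : K) : Prop :=
  derivable (fun t : K^o => (g t y : K^o)) x 1 /\
  derivable (fun t : K^o => (g x t : K^o)) y 1.

Definition jac_det2 (S : K -> K -> K * K) (x y : K) : K :=
  let u := fun a b => (S a b).1 in
  let v := fun a b => (S a b).2 in
  pdx u x y * pdy v x y - pdy u x y * pdx v x y.

Definition map_has_partials (S : K -> K -> K * K) (x y : K) : Prop :=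
  has_partials (fun a b => (S a b).1) x y /\
  has_partials (fun a b => (S a b).2) x y.

(* S preserves the Poisson structure  m(x,y) dx /\ dy  on the set D:   *)
(* the push-forward of the bivector equals itself, i.e.                *)
(* m(S(x,y)) = det(dS(x,y)) * m(x,y).                                  *)
Definition preserves_poisson (D : set (K * K)) (S : K -> K -> K * K)
    (m : K -> K -> K) : Prop :=
  forall x y, D (x, y) ->
    map_has_partials S x y /\
    m (S x y).1 (S x y).2 = jac_det2 S x y * m x y.

Definition invariant_on (D : set (K * K)) (S : K -> K -> K * K)
    (I : K -> K -> K) : Prop :=
  forall x y, D (x, y) -> I (S x y).1 (S x y).2 = I x y.

(* A single function is functionally independent iff its differential *)
(* is not identically zero on the domain.                              *)
Definition functionally_independent (D : set (K * K)) (I : K -> K -> K) : Prop :=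
  (forall x y, D (x, y) -> has_partials I x y) /\
  exists x y, D (x, y) /\ (pdx I x y != 0 \/ pdy I x y != 0).

(* Liouville integrability in the sense of Veselov, in dimension 2:    *)
(* S preserves a (nondegenerate on D) Poisson structure and admits one *)
(* functionally independent invariant.                                 *)
Definition liouville_integrable2 (D : set (K * K)) (S : K -> K -> K * K) : Prop :=
  exists (m : K -> K -> K) (I : K -> K -> K),
    (forall x y, D (x, y) -> m x y != 0) /\
    preserves_poisson D S m /\ invariant_on D S I /\ functionally_independent D I.

End Generic.

Section Pentagon.
Variable Y : Type.
Definition S12 (S : Y -> Y -> Y * Y) (t : Y * Y * Y) : Y * Y * Y :=
  let: (a, b, c) := t in ((S a b).1, (S a b).2, c).
Definition S23 (S : Y -> Y -> Y * Y) (t : Y * Y * Y) : Y * Y * Y :=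
  let: (a, b, c) := t in (a, (S b c).1, (S b c).2).
Definition S13 (S : Y -> Y -> Y * Y) (t : Y * Y * Y) : Y * Y * Y :=
  let: (a, b, c) := t in ((S a c).1, b, (S a c).2).
Definition pentagon_on (P : set (Y * Y * Y)) (S : Y -> Y -> Y * Y) : Prop :=
  forall t, P t -> S12 S (S13 S (S23 S t)) = S23 S (S12 S t).
End Pentagon.

(* Case alpha = 1 : X = CP^1, worked in the affine coordinate x in C.  *)
Section CaseOne.
Variable R : realType.
Local Notation C := (R[i]).
Definition fC (x : C) : C := 1 - x.
Definition SC (x y : C) : C * C := (x * fC y / fC (x * y), x * y).
(* m(x,y) = y f(y)^(alpha-1) f(x)^alpha with alpha = 1 *)
Definition mC (x y : C) : C := y * fC y ^+ 0 * fC x.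
Definition IC (x y : C) : C := x * fC y.
End CaseOne.

Section CaseGen.
Variable R : realType.
Variable alpha : R.
Definition X01 : set R := [set x | 0 < x < 1].
Definition fR (x : R) : R := (1 - x `^ alpha) `^ alpha^-1.
Definition SR (x y : R) : R * R := (x * fR y / fR (x * y), x * y).
Definition mR (x y : R) : R := y * fR y `^ (alpha - 1) * fR x `^ alpha.
Definition IR (x y : R) : R := x * fR y.
End CaseGen.

(* Main.v *)
Require Import Defs.
From HB Require Import structures.
From mathcomp Require Import all_boot all_order all_algebra.
From mathcomp Require Import all_classical all_reals all_analysis.
From mathcomp Require Import complex.
From mathcomp Require Import ring lra.
Import Order.TTheory GRing.Theory Num.Theory.
Import numFieldNormedType.Exports.
Local Open Scope ring_scope.
Local Open Scope classical_set_scope.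

Section G.
Context {K : numFieldType}.
Lemma isdV (f : K^o -> K^o) (x t : K) : is_derive x 1 f t -> f x != 0 ->
  is_derive x 1 (fun y => (f y)^-1 : K^o) (-(f x)^-2 * t).
Proof.
move=> [df dfe] fx; split; first exact: derivableV.
by rewrite deriveV // dfe.
Qed.
Lemma isdM (f g : K^o -> K^o) (x a b : K) : is_derive x 1 f a -> is_derive x 1 g b ->
  is_derive x 1 (fun y => f y * g y : K^o) (f x * b + g x * a).
Proof. move=> ha hb. exact: (is_deriveM ha hb). Qed.
Lemma isdB (f g : K^o -> K^o) (x a b : K) : is_derive x 1 f a -> is_derive x 1 g b ->
  is_derive x 1 (fun y => f y - g y : K^o) (a - b).
Proof. move=> ha hb. exact: (is_deriveB ha hb). Qed.
Lemma isd_id (x : K) : is_derive x 1 (fun y : K^o => y) 1.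
Proof. exact: is_derive_id. Qed.
Lemma isd_cst (c x : K) : is_derive x 1 (fun _ : K^o => c : K^o) 0.
Proof. exact: is_derive_cst. Qed.
Lemma isd_ext (f g : K^o -> K^o) (x d d' : K) : (forall t, f t = g t) -> d = d' ->
  is_derive x 1 g d -> is_derive x 1 f d'.
Proof. by move=> /funext -> ->. Qed.
Lemma isd_val (f : K^o -> K^o) (x d : K) : is_derive x 1 f d -> derive1 f x = d.
Proof. by move=> h; rewrite derive1E; exact: derive_val. Qed.
Lemma isd_der (f : K^o -> K^o) (x d : K) : is_derive x 1 f d -> derivable f x 1.
Proof. by case. Qed.
End G.
Arguments isdV {K f x t}.
Arguments isdM {K f g x a b}.
Arguments isdB {K f g x a b}.
Arguments isd_ext {K f g x d d'}.
Arguments isd_der {K f x d}.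
Arguments isd_val {K f x d}.


Section CC.
Context {R : realType}.
Local Notation C := (R[i]).

Lemma dux (x y : C) : fC (x * y) != 0 ->
  is_derive (x : C^o) 1 (fun t : C^o => ((SC t y).1 : C^o)) (fC y / fC (x*y) ^+ 2).
Proof.
move=> h.
have H := isdM (isdM (isd_id x) (isd_cst (fC y) x))
   (isdV (isdB (isd_cst 1 x) (isdM (isd_id x) (isd_cst y x))) h).
apply: (isd_ext _ _ H) => [t|]; first by rewrite /SC /fC /=.
move: h; rewrite /fC => h; field; exact: h.
Qed.

Lemma duy (x y : C) : fC (x * y) != 0 ->
  is_derive (y : C^o) 1 (fun t : C^o => ((SC x t).1 : C^o)) (x * (x - 1) / fC (x*y) ^+ 2).
Proof.
move=> h.
have H := isdM (isdM (isd_cst x y) (isdB (isd_cst 1 y) (isd_id y)))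
   (isdV (isdB (isd_cst 1 y) (isdM (isd_cst x y) (isd_id y))) h).
apply: (isd_ext _ _ H) => [t|]; first by rewrite /SC /fC /=.
move: h; rewrite /fC => h; field; exact: h.
Qed.

Lemma dvx (x y : C) :
  is_derive (x : C^o) 1 (fun t : C^o => ((SC t y).2 : C^o)) y.
Proof.
have H := isdM (isd_id x) (isd_cst y x).
apply: (isd_ext _ _ H) => [t|] //=; ring.
Qed.
Lemma dvy (x y : C) :
  is_derive (y : C^o) 1 (fun t : C^o => ((SC x t).2 : C^o)) x.
Proof.
have H := isdM (isd_cst x y) (isd_id y).
apply: (isd_ext _ _ H) => [t|] //=; ring.
Qed.
End CC.

Section CC2.
Variable R : realType.
Local Notation C := (R[i]).

Lemma jacC (x y : C) : fC (x * y) != 0 ->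
  map_has_partials (@SC R) x y /\
  jac_det2 (@SC R) x y = x / fC (x * y).
Proof.
move=> h; split.
  split; split; [exact: isd_der (dux x y h)|exact: isd_der (duy x y h)|
                 exact: isd_der (dvx x y)|exact: isd_der (dvy x y)].
rewrite /jac_det2 /pdx /pdy (isd_val (dux x y h)) (isd_val (duy x y h))
  (isd_val (dvx x y)) (isd_val (dvy x y)).
move: h; rewrite /fC => h; field; exact: h.
Qed.

Lemma caseC :
     (forall x y : R[i], fC (x * y) != 0 ->
        fC (SC x y).1 * fC (SC x y).2 = fC x)
  /\ pentagon_on [set t | let: (x1, x2, x3) := t in
                   [/\ fC (x2 * x3) != 0, fC (x1 * x2) != 0 &
                       fC (x1 * x2 * x3) != 0]] (@SC R)
  /\ (forall x y : R[i], [/\ y != 0, fC x != 0 & fC (x * y) != 0] ->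
        map_has_partials (@SC R) x y /\
        mC (SC x y).1 (SC x y).2 / mC x y = jac_det2 (@SC R) x y)
  /\ (forall x y : R[i], fC (x * y) != 0 ->
        IC (SC x y).1 (SC x y).2 = IC x y)
  /\ liouville_integrable2
       [set p : R[i] * R[i] | [/\ p.2 != 0, fC p.1 != 0 & fC (p.1 * p.2) != 0]]
       (@SC R).
Proof.
have hI : forall x y : R[i], fC (x * y) != 0 ->
        IC (SC x y).1 (SC x y).2 = IC x y.
  move=> x y; rewrite /IC /SC /fC /= => h; field; exact: h.
have hm : forall x y : R[i], [/\ y != 0, fC x != 0 & fC (x * y) != 0] ->
        map_has_partials (@SC R) x y /\
        mC (SC x y).1 (SC x y).2 / mC x y = jac_det2 (@SC R) x y.
  move=> x y [h1 h2 h3]; have [hp ->] := jacC x y h3; split => //.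
  move: h2 h3; rewrite /mC /SC /fC /= => h2 h3; field; apply/and3P; split => //.
split.
  move=> x y; rewrite /SC /fC /= => h; field; exact: h.
split.
  case=> [[x1 x2] x3] /= [h1 h2 h3].
  rewrite /S12 /S13 /S23 /SC /=.
  move: h1 h2 h3; rewrite /fC => h1 h2 h3.
  have e1 : x1 * (x2 * (1 - x3) / (1 - x2 * x3)) = x1 * x2 * (1 - x3) / (1 - x1*x2*x3) * ((1 - x1*x2*x3) / (1 - x2 * x3)).
    by field; apply/andP.
  have e2 : 1 - x1 * (1 - x2 * x3) / (1 - x1 * (x2 * x3)) * (x2 * (1 - x3) / (1 - x2 * x3)) = (1 - x1 * x2) / (1 - x1*x2*x3).
    rewrite mulrA; field; apply/andP; split => //; by rewrite mulrA.
  rewrite e2.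
  congr (_, _, _).
  - field.
    by rewrite h1 h2 h3.
  - field; apply/andP; split => //; by rewrite mulrA.
  - by rewrite mulrA.
split => //.
split => //.
exists (@mC R), (@IC R); split.
  move=> x y [h1 h2 h3]; rewrite /mC expr0 mulr1 mulf_neq0 //.
split.
  move=> x y /= hD; have [hp e] := hm x y hD; split => //.
  case: hD => h1 h2 h3.
  rewrite -e divfK // /mC expr0 mulr1 mulf_neq0 //.
split.
  by move=> x y /= [_ _ h]; exact: hI.
split.
  move=> x y _; split.
    apply: isd_der (isdM (isd_id x) (isd_cst (fC y) x)).
  apply: isd_der (isdM (isd_cst x y) (isdB (isd_cst 1 y) (isd_id y))).
exists 0, 2; split.
  rewrite /= /fC mul0r subr0; split => //; exact: oner_neq0.
left; rewrite /pdx (isd_val (isdM (isd_id (0:C)) (isd_cst (fC 2) 0))).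
rewrite mul0r add0r mulr1 /fC.
rewrite (_ : 1 - 2 = -1 :> R[i]); last by ring.
by rewrite oppr_eq0 oner_eq0.
Qed.
End CC2.

Section RR.
Variable R : realType.
Variable a : R.
Hypothesis ha : 0 < a.
Local Notation P t := (t `^ a).
Local Notation f := (fR a).

Lemma powX01 (b s : R) : 0 < s -> X01 b -> X01 (b `^ s).
Proof.
move=> s0 [/andP [b0 b1]]; apply/andP; split; first by rewrite powR_gt0.
have := gt0_ltr_powR s0 (x:=b) (y:=1); rewrite powR1; apply.
- by rewrite nnegrE ltW.
- by rewrite nnegrE.
- exact: b1.
Qed.

Lemma P01 (t : R) : X01 t -> 0 < P t < 1.
Proof. exact: powX01. Qed.

Lemma X01_gt0 (t : R) : X01 t -> 0 < t.
Proof. by case/andP. Qed.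

Lemma P1 : P 1 = 1. Proof. by rewrite powR1. Qed.

Lemma PM b c : 0 <= b -> 0 <= c -> P (b * c) = P b * P c.
Proof. exact: powRM. Qed.

Lemma PV b : 0 < b -> P (b^-1) = (P b)^-1.
Proof.
move=> b0; have : P (b^-1) * P b = 1 by rewrite -PM ?mulVf ?P1 ?gt_eqF // ltW // invr_gt0.
move=> h; apply: (mulIf (x:= P b)); first by rewrite gt_eqF // powR_gt0.
by rewrite h mulVf // gt_eqF // powR_gt0.
Qed.

Lemma Pinj b c : 0 <= b -> 0 <= c -> P b = P c -> b = c.
Proof. by move=> b0 c0; apply: powR_injective; rewrite ?nnegrE. Qed.

Lemma Plt b c : 0 <= b -> 0 <= c -> P b < P c -> b < c.
Proof.
move=> b0 c0 h; rewrite ltNge; apply/negP => cb.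
have := ge0_ler_powR (ltW ha) (x:=c) (y:=b); rewrite !nnegrE => /(_ c0 b0 cb).
by rewrite leNgt h.
Qed.

Lemma f01 (t : R) : X01 t -> X01 (f t).
Proof.
move=> /P01 /andP [h1 h2]; apply: powX01; first by rewrite invr_gt0.
apply/andP; split; lra.
Qed.

Lemma fP (t : R) : X01 t -> P (f t) = 1 - P t.
Proof.
move=> /P01 /andP [h1 h2]; rewrite /fR -powRrM mulVf ?powRr1 ?gt_eqF //; lra.
Qed.

Definition T1 (X Y : R) := X * (1 - Y) / (1 - X * Y).

Lemma T1e1 (X1 X2 X3 : R) : 0 < X1 < 1 -> 0 < X2 < 1 -> 0 < X3 < 1 ->
  T1 (T1 X1 (X2 * X3)) (T1 X2 X3) = T1 X1 X2.
Proof.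
move=> /andP [a0 a1] /andP [b0 b1] /andP [c0 c1].
have h1 : 1 - X2 * X3 != 0 by rewrite gt_eqF //; nra.
have h2 : 1 - X1 * (X2 * X3) != 0 by rewrite gt_eqF //; nra.
have h3 : 1 - X1 * X2 != 0 by rewrite gt_eqF //; nra.
have e : 1 - T1 X1 (X2 * X3) * T1 X2 X3 = (1 - X1 * X2) / (1 - X1 * (X2 * X3)).
  rewrite /T1; field; by rewrite h1 h2.
rewrite {1}/T1 e /T1; field; by rewrite h1 h2 h3.
Qed.

Lemma T1e2 (X1 X2 X3 : R) : 0 < X1 < 1 -> 0 < X2 < 1 -> 0 < X3 < 1 ->
  T1 X1 (X2 * X3) * T1 X2 X3 = T1 (X1 * X2) X3.
Proof.
move=> /andP [a0 a1] /andP [b0 b1] /andP [c0 c1].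
have h1 : 1 - X2 * X3 != 0 by rewrite gt_eqF //; nra.
have h2 : 1 - X1 * (X2 * X3) != 0 by rewrite gt_eqF //; nra.
have h2' : 1 - X1 * X2 * X3 != 0 by rewrite -mulrA.
rewrite /T1; field; by rewrite ?h1 ?h2 ?h2'.
Qed.

Lemma aux3 (X Y : R) : 0 < X < 1 -> 0 < Y < 1 -> 1 - X * Y != 0.
Proof. move=> /andP [? ?] /andP [? ?]; rewrite gt_eqF // subr_gt0; nra. Qed.

Lemma XM (x y : R) : X01 x -> X01 y -> X01 (x * y).
Proof. move=> /andP [? ?] /andP [? ?]; apply/andP; split; nra. Qed.

Lemma aux1 (X Y : R) : 0 < X < 1 -> 0 < Y < 1 -> X * (1 - Y) / (1 - X * Y) < 1.
Proof.
move=> /andP [X0 X1] /andP [Y0 Y1].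
have h : 0 < 1 - X * Y by nra.
rewrite ltr_pdivrMr //; nra.
Qed.

Lemma powRm1 (b c : R) : 0 < b -> b `^ (c - 1) = b `^ c / b.
Proof.
move=> b0; rewrite powRB ?powRr1 ?ltW //.
by apply/implyP => _; rewrite gt_eqF.
Qed.

Lemma alg0 (t T F : R) : t != 0 -> 1 - T != 0 ->
  a^-1 * (F / (1 - T)) * (0 - a * (T / t)) = - T * F / (t * (1 - T)).
Proof. move=> h1 h2; have h3 : a != 0 by rewrite gt_eqF. by field; rewrite h1 h2 h3. Qed.

Lemma dfR (t : R) : X01 t ->
  is_derive (t : R^o) 1 (fun s : R^o => (fR a s : R^o)) (- P t * f t / (t * (1 - P t))).
Proof.
move=> ht; have t0 := X01_gt0 _ ht; have [/andP [T0 T1']] := P01 _ ht.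
have T0' : 0 < 1 - P t by lra.
have Hg := isdB (isd_cst 1 t) (is_derive1_powR a t0).
have Hf := is_derive1_powR (a^-1) T0'.
have H := @is_derive1_comp _ _ (fun s : R => 1 - P s) t _ _ Hf Hg.
apply: (isd_ext _ _ H) => //.
rewrite (powRm1 _ _ T0') (powRm1 _ _ t0).
apply: alg0; rewrite gt_eqF //.
Qed.

Local Opaque fR powR.

Lemma alg_ux (x y Fy Fxy T : R) : x != 0 -> y != 0 -> Fxy != 0 -> 1 - T != 0 ->
  x * Fy * (- Fxy ^- 2 * (- T * Fxy / (x * y * (1 - T)) * (x * 0 + y * 1))) +
  Fxy^-1 * (x * 0 + Fy * 1) = Fy / (Fxy * (1 - T)).
Proof. by move=> h1 h2 h3 h4; field; rewrite h1 h2 h3 h4. Qed.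
Lemma PSu x y : X01 x -> X01 y ->
  P (SR a x y).1 = P x * (1 - P y) / (1 - P x * P y).
Proof.
move=> hx hy.
have [/andP [x0 x1]] := hx; have [/andP [y0 y1]] := hy.
have xy := XM _ _ hx hy.
have [/andP [fy0 fy1]] := f01 _ hy; have [/andP [fxy0 fxy1]] := f01 _ xy.
rewrite /SR /=.
have g1 : 0 <= x * f y by apply: mulr_ge0; apply: ltW.
have g2 : 0 <= (f (x * y))^-1 by apply: ltW; rewrite invr_gt0.
rewrite (PM _ _ g1 g2).
rewrite (PV _ fxy0).
rewrite (PM _ _ (ltW x0) (ltW fy0)).
rewrite -(PM _ _ (ltW x0) (ltW y0)).
by congr (_ * _ / _); [exact: (fP _ hy) | exact: (fP _ xy)].
Qed.

Lemma PSv x y : X01 x -> X01 y -> P (SR a x y).2 = P x * P y.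
Proof.
move=> [/andP [x0 x1]] [/andP [y0 y1]]; by rewrite /SR /= (PM _ _ (ltW x0) (ltW y0)).
Qed.


Lemma S01 x y : X01 x -> X01 y -> X01 (SR a x y).1 /\ X01 (SR a x y).2.
Proof.
move=> hx hy.
have [/andP [x0 x1]] := hx; have [/andP [y0 y1]] := hy.
have xy := XM _ _ hx hy.
split => //.
have [/andP [fy0 fy1]] := f01 _ hy; have [/andP [fxy0 fxy1]] := f01 _ xy.
have u0 : 0 < (SR a x y).1 by rewrite /SR /= divr_gt0 // mulr_gt0.
apply/andP; split => //.
apply: Plt; rewrite ?ler01 ?ltW // P1 PSu //.
exact: aux1 (P01 _ hx) (P01 _ hy).
Qed.

Lemma aux2 (X Y : R) : 0 < X < 1 -> 0 < Y < 1 ->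
  (1 - X * (1 - Y) / (1 - X * Y)) * (1 - X * Y) = 1 - X.
Proof.
move=> /andP [X0 X1] /andP [Y0 Y1].
have h : 1 - X * Y != 0 by rewrite gt_eqF //; nra.
by field.
Qed.

Lemma fprod x y : X01 x -> X01 y ->
  f (SR a x y).1 * f (SR a x y).2 = f x.
Proof.
move=> hx hy; have [hu hv] := S01 _ _ hx hy.
have [/andP [fu0 _]] := f01 _ hu; have [/andP [fv0 _]] := f01 _ hv.
have [/andP [fx0 _]] := f01 _ hx.
apply: Pinj; [by apply: mulr_ge0; apply: ltW | by apply: ltW |].
rewrite (PM _ _ (ltW fu0) (ltW fv0)).
apply: (eq_trans (_ : _ = (1 - P (SR a x y).1) * (1 - P (SR a x y).2))).
  by congr (_ * _); [exact: fP | exact: fP].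
apply: (eq_trans _ (esym (fP _ hx))).
rewrite (PSu _ _ hx hy) (PSv _ _ hx hy).
exact: aux2 (P01 _ hx) (P01 _ hy).
Qed.

Lemma invR x y : X01 x -> X01 y -> IR a (SR a x y).1 (SR a x y).2 = IR a x y.
Proof.
move=> hx hy; have [/andP [x0 x1]] := hx; have [/andP [y0 y1]] := hy.
have xy := XM _ _ hx hy.
have [/andP [fxy0 _]] := f01 _ xy.
rewrite /IR /SR /= -mulrA mulVf ?mulr1 // gt_eqF //.
Qed.

Lemma PSu' x y : X01 x -> X01 y -> P (SR a x y).1 = T1 (P x) (P y).
Proof. by move=> hx hy; rewrite (PSu _ _ hx hy). Qed.

Lemma pentR : pentagon_on [set t | let: (x1, x2, x3) := t in
                   [/\ X01 x1, X01 x2 & X01 x3]] (SR a).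
Proof.
move=> [[x1 x2] x3] [h1 h2 h3].
cbv beta iota delta [S12 S13 S23].
case E23: (SR a x2 x3) => [u23 v23].
have [hu23 hv23] := S01 _ _ h2 h3; rewrite E23 /= in hu23 hv23.
have Pu23 := PSu' _ _ h2 h3; rewrite E23 /= in Pu23.
have Pv23 := PSv _ _ h2 h3; rewrite E23 /= in Pv23.
case E1: (SR a x1 v23) => [p q].
have [hp hq] := S01 _ _ h1 hv23; rewrite E1 /= in hp hq.
have Pp := PSu' _ _ h1 hv23; rewrite E1 /= in Pp.
have Pq := PSv _ _ h1 hv23; rewrite E1 /= in Pq.
case E2: (SR a p u23) => [r s].
have Pr := PSu' _ _ hp hu23; rewrite E2 /= in Pr.
have Ps := PSv _ _ hp hu23; rewrite E2 /= in Ps.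
have [hr hs] := S01 _ _ hp hu23; rewrite E2 /= in hr hs.
case E12: (SR a x1 x2) => [c d].
have Pc := PSu' _ _ h1 h2; rewrite E12 /= in Pc.
have Pd := PSv _ _ h1 h2; rewrite E12 /= in Pd.
have [hc hd] := S01 _ _ h1 h2; rewrite E12 /= in hc hd.
case E4: (SR a d x3) => [e g].
have Pe := PSu' _ _ hd h3; rewrite E4 /= in Pe.
have Pg := PSv _ _ hd h3; rewrite E4 /= in Pg.
have [he hg] := S01 _ _ hd h3; rewrite E4 /= in he hg.
rewrite /=; congr (_, _, _); apply: Pinj; rewrite ?ltW ?X01_gt0 //.
- rewrite Pr Pp Pv23 Pu23 Pc.
  exact: T1e1 (P01 _ h1) (P01 _ h2) (P01 _ h3).
- rewrite Ps Pp Pv23 Pu23 Pe Pd.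
  exact: T1e2 (P01 _ h1) (P01 _ h2) (P01 _ h3).
- by rewrite Pq Pv23 Pg Pd mulrA.
Qed.

Lemma rdux (x y : R) : X01 x -> X01 y ->
  is_derive (x : R^o) 1 (fun t : R^o => ((SR a t y).1 : R^o))
    (f y / (f (x * y) * (1 - P (x * y)))).
Proof.
move=> hx hy; have [/andP [x0 x1]] := hx; have [/andP [y0 y1]] := hy.
have xy := XM _ _ hx hy.
have [/andP [fxy0 _]] := f01 _ xy.
have H1 := isdM (isd_id x) (isd_cst y x).
have Hc := @is_derive1_comp _ (fR a) (fun t => t * y) x _ _ (dfR _ xy) H1.
have nz : f (x * y) != 0 by rewrite gt_eqF.
have HV := isdV Hc nz.
have H := isdM (isdM (isd_id x) (isd_cst (f y) x)) HV.
apply: (isd_ext _ _ H) => [t|] //.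
have T1' : 1 - P (x * y) != 0 by have [/andP [_ ?]] := P01 _ xy; rewrite gt_eqF // subr_gt0.
rewrite /=.
move: (f y) (f (x * y)) (P (x * y)) nz T1' => Fy Fxy T nz' T1''.
have x0' := lt0r_neq0 x0; have y0' := lt0r_neq0 y0.
by field; repeat (apply/andP; split).
Qed.

Lemma rduy (x y : R) : X01 x -> X01 y ->
  is_derive (y : R^o) 1 (fun t : R^o => ((SR a x t).1 : R^o))
    (x * f y / (y * f (x * y)) * (P (x * y) / (1 - P (x * y)) - P y / (1 - P y))).
Proof.
move=> hx hy; have [/andP [x0 x1]] := hx; have [/andP [y0 y1]] := hy.
have xy := XM _ _ hx hy.
have [/andP [fxy0 _]] := f01 _ xy.
have H1 := isdM (isd_cst x y) (isd_id y).
have Hc := @is_derive1_comp _ (fR a) (fun t => x * t) y _ _ (dfR _ xy) H1.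
have nz : f (x * y) != 0 by rewrite gt_eqF.
have HV := isdV Hc nz.
have Hn := isdM (isd_cst x y) (dfR _ hy).
have H := isdM Hn HV.
apply: (isd_ext _ _ H) => [t|] //.
have T1' : 1 - P (x * y) != 0 by have [/andP [_ ?]] := P01 _ xy; rewrite gt_eqF // subr_gt0.
have Y1' : 1 - P y != 0 by have [/andP [_ ?]] := P01 _ hy; rewrite gt_eqF // subr_gt0.
rewrite /=.
move: (f y) (f (x * y)) (P (x * y)) (P y) nz T1' Y1' => Fy Fxy T Y nz' T1'' Y1''.
have x0' := lt0r_neq0 x0; have y0' := lt0r_neq0 y0.
by field; repeat (apply/andP; split).
Qed.

Lemma rdvx (x y : R) :
  is_derive (x : R^o) 1 (fun t : R^o => ((SR a t y).2 : R^o)) y.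
Proof.
have H := isdM (isd_id x) (isd_cst y x).
apply: (isd_ext _ _ H) => [t|] //=; ring.
Qed.

Lemma rdvy (x y : R) :
  is_derive (y : R^o) 1 (fun t : R^o => ((SR a x t).2 : R^o)) x.
Proof.
have H := isdM (isd_cst x y) (isd_id y).
apply: (isd_ext _ _ H) => [t|] //=; ring.
Qed.

Lemma jacR (x y : R) : X01 x -> X01 y ->
  map_has_partials (SR a) x y /\
  jac_det2 (SR a) x y = x * f y / (f (x * y) * (1 - P y)).
Proof.
move=> hx hy; split.
  split; split; [exact: isd_der (rdux _ _ hx hy)|exact: isd_der (rduy _ _ hx hy)|
                 exact: isd_der (rdvx x y)|exact: isd_der (rdvy x y)].
apply: (eq_trans (y := (f y / (f (x * y) * (1 - P (x * y)))) * x -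
   (x * f y / (y * f (x * y)) * (P (x * y) / (1 - P (x * y)) - P y / (1 - P y))) * y)).
  rewrite /jac_det2; congr (_ * _ - _ * _).
  - exact: isd_val (rdux _ _ hx hy).
  - exact: isd_val (rdvy x y).
  - exact: isd_val (rduy _ _ hx hy).
  - exact: isd_val (rdvx x y).
have [/andP [x0 x1]] := hx; have [/andP [y0 y1]] := hy.
have xy := XM _ _ hx hy.
have [/andP [fxy0 _]] := f01 _ xy.
have nz : f (x * y) != 0 by rewrite gt_eqF.
have T1' : 1 - P (x * y) != 0 by have [/andP [_ ?]] := P01 _ xy; rewrite gt_eqF // subr_gt0.
have Y1' : 1 - P y != 0 by have [/andP [_ ?]] := P01 _ hy; rewrite gt_eqF // subr_gt0.
move: (f y) (f (x * y)) (P (x * y)) (P y) nz T1' Y1' => Fy Fxy T Y nz' T1'' Y1''.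
have x0' := lt0r_neq0 x0; have y0' := lt0r_neq0 y0.
by field; repeat (apply/andP; split).
Qed.

Lemma mRid x y : X01 x -> X01 y ->
  mR a (SR a x y).1 (SR a x y).2 / mR a x y = x * f y / (f (x * y) * (1 - P y)).
Proof.
move=> hx hy; have [hu hv] := S01 _ _ hx hy.
have [/andP [x0 x1]] := hx; have [/andP [y0 y1]] := hy.
have [/andP [fu0 _]] := f01 _ hu; have [/andP [fv0 _]] := f01 _ hv.
have [/andP [fy0 _]] := f01 _ hy; have [/andP [fx0 _]] := f01 _ hx.
rewrite /mR.
apply: (eq_trans (y := (x * y) * ((1 - P x * P y) / f (x * y)) * (1 - T1 (P x) (P y)) /
   (y * ((1 - P y) / f y) * (1 - P x)))).
  congr (_ * _ * _ / (_ * _ * _)).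
  - rewrite (powRm1 _ _ fv0); congr (_ / _).
    by rewrite (fP _ hv) (PSv _ _ hx hy).
  - by rewrite (fP _ hu) (PSu' _ _ hx hy).
  - by rewrite (powRm1 _ _ fy0) (fP _ hy).
  - by rewrite (fP _ hx).
have [/andP [X0 X1]] := P01 _ hx; have [/andP [Y0 Y1]] := P01 _ hy.
have XY := aux3 _ _ (P01 _ hx) (P01 _ hy).
have X1' : 1 - P x != 0 by rewrite gt_eqF // subr_gt0.
have Y1' : 1 - P y != 0 by rewrite gt_eqF // subr_gt0.
have fy' := lt0r_neq0 fy0.
have xy := XM _ _ hx hy.
have [/andP [fxy0 _]] := f01 _ xy; have fxy' := lt0r_neq0 fxy0.
have x0' := lt0r_neq0 x0; have y0' := lt0r_neq0 y0.
rewrite /T1.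
move: (f y) (f (x * y)) (P x) (P y) fy' fxy' XY X1' Y1' => Fy Fxy X Y fy'' fxy'' XY' X1'' Y1''.
by field; repeat (apply/andP; split).
Qed.

Lemma caseR :
     (forall x y, X01 x -> X01 y -> X01 (SR a x y).1 /\ X01 (SR a x y).2)
  /\ (forall x y, X01 x -> X01 y ->
        fR a (SR a x y).1 * fR a (SR a x y).2 = fR a x)
  /\ pentagon_on [set t | let: (x1, x2, x3) := t in
                   [/\ X01 x1, X01 x2 & X01 x3]] (SR a)
  /\ (forall x y, X01 x -> X01 y ->
        map_has_partials (SR a) x y /\
        mR a (SR a x y).1 (SR a x y).2 / mR a x y
          = jac_det2 (SR a) x y)
  /\ (forall x y, X01 x -> X01 y ->
        IR a (SR a x y).1 (SR a x y).2 = IR a x y)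
  /\ liouville_integrable2 [set p : R * R | X01 p.1 /\ X01 p.2] (SR a).
Proof.
have mpos : forall x y, X01 x -> X01 y -> 0 < mR a x y.
  move=> x y hx hy; rewrite /mR; apply: mulr_gt0; last exact: powR_gt0 (X01_gt0 _ (f01 _ hx)).
  by apply: mulr_gt0; [exact: X01_gt0 | exact: powR_gt0 (X01_gt0 _ (f01 _ hy))].
have hm : forall x y, X01 x -> X01 y ->
        map_has_partials (SR a) x y /\
        mR a (SR a x y).1 (SR a x y).2 / mR a x y = jac_det2 (SR a) x y.
  move=> x y hx hy; have [hp ->] := jacR _ _ hx hy; split => //; exact: mRid.
split; first exact: S01.
split; first exact: fprod.
split; first exact: pentR.
split; first exact: hm.
split; first exact: invR.
exists (mR a), (IR a); split.
  by move=> x y [hx hy]; rewrite gt_eqF // mpos.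
split.
  move=> x y [hx hy]; have [hp e] := hm x y hx hy; split => //.
  by rewrite -e divfK // gt_eqF // mpos.
split.
  by move=> x y [hx hy]; exact: invR.
split.
  move=> x y [hx hy]; split.
    exact: isd_der (isdM (isd_id x) (isd_cst (f y) x)).
  exact: isd_der (isdM (isd_cst x y) (dfR _ hy)).
have h2 : X01 (2^-1 : R).
  by apply/andP; split; [rewrite invr_gt0 | rewrite invf_lt1 // ltr1n].
exists 2^-1, 2^-1; split; first by split.
left; rewrite /pdx (isd_val (isdM (isd_id (2^-1 : R)) (isd_cst (f 2^-1) 2^-1))).
rewrite mulr0 add0r mulr1; apply: lt0r_neq0; apply: X01_gt0; exact: f01.
Qed.
End RR.

Theorem mainTheorem4 (R : realType) (alpha : R) (halpha : 0 < alpha) :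
  (* case alpha = 1 : X = CP^1 (affine chart C = R[i]), f(x) = 1 - x;      *)
  (* identities of rational maps, stated at the generic points where all    *)
  (* the denominators involved are nonzero                                  *)
  (alpha = 1 ->
     (forall x y : R[i], fC (x * y) != 0 ->
        fC (SC x y).1 * fC (SC x y).2 = fC x)
  /\ pentagon_on [set t | let: (x1, x2, x3) := t in
                   [/\ fC (x2 * x3) != 0, fC (x1 * x2) != 0 &
                       fC (x1 * x2 * x3) != 0]] (@SC R)
  /\ (forall x y : R[i], [/\ y != 0, fC x != 0 & fC (x * y) != 0] ->
        map_has_partials (@SC R) x y /\
        mC (SC x y).1 (SC x y).2 / mC x y = jac_det2 (@SC R) x y)
  /\ (forall x y : R[i], fC (x * y) != 0 ->
        IC (SC x y).1 (SC x y).2 = IC x y)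
  /\ liouville_integrable2
       [set p : R[i] * R[i] | [/\ p.2 != 0, fC p.1 != 0 & fC (p.1 * p.2) != 0]]
       (@SC R))
  /\
  (* case alpha <> 1 : X = (0,1), f(x) = (1 - x^alpha)^(1/alpha) *)
  (alpha != 1 ->
     (forall x y, X01 x -> X01 y -> X01 (SR alpha x y).1 /\ X01 (SR alpha x y).2)
  /\ (forall x y, X01 x -> X01 y ->
        fR alpha (SR alpha x y).1 * fR alpha (SR alpha x y).2 = fR alpha x)
  /\ pentagon_on [set t | let: (x1, x2, x3) := t in
                   [/\ X01 x1, X01 x2 & X01 x3]] (SR alpha)
  /\ (forall x y, X01 x -> X01 y ->
        map_has_partials (SR alpha) x y /\
        mR alpha (SR alpha x y).1 (SR alpha x y).2 / mR alpha x y
          = jac_det2 (SR alpha) x y)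
  /\ (forall x y, X01 x -> X01 y ->
        IR alpha (SR alpha x y).1 (SR alpha x y).2 = IR alpha x y)
  /\ liouville_integrable2 [set p : R * R | X01 p.1 /\ X01 p.2] (SR alpha)).
Proof.
split.
  by move=> _; exact: caseC.
by move=> _; exact: (@caseR R alpha halpha).
Qed.
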